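(* Let the standing assumptions (listed in the context) hold. Let $(x_k)$ have a cluster point $x^*$ such that $\mathcal{J}|_{\mathcal{N}}$ is strongly convex, where $\mathcal{N}\subset\Omega$ is a convex neighborhood of $x^*$. Then $\lim_{k\to\infty}x_k=x^*$.
   Context: Let $\mathcal{X}$ be a Hilbert space and $\mathcal{J}:\mathcal{X}\to\mathbb{R}$. Algorithm SLBFGS (structured inverse L-BFGS): inputs $x_0\in\mathcal{X}$, $\epsilon\geq0$, $\ell\in\mathbb{N}_0$, $c_0\geq 0$, $C_0\in[c_0,\infty]$, $c_s,c_1,c_2>0$; let $\tau_0>0$. For $k=0,1,2,\ldots$: let $m=\max\{0,k-\ell\}$; choose a symmetric positive semi-definite bounded linear operator $S_k$; set $B_k^{(0)}=\tau_k I+S_k$; let $B_k$ be obtained from $B_k^{(0)}$ and the currently stored pairs $(s_j,y_j)$, $m\le j\le k-1$, by successive L-BFGS updates $B\mapsto B+\frac{yy^T}{y^Ts}-\frac{Bss^TB}{s^TBs}$; set $d_k=-B_k^{-1}\nabla\mathcal{J}(x_k)$; compute a step length $\alpha_k>0$ by a line search; set $s_k=\alpha_kd_k$, $x_{k+1}=x_k+s_k$, $y_k=\nabla\mathcal{J}(x_{k+1})-\nabla\mathcal{J}(x_k)$; store $(s_k,y_k)$ only if $y_k^Ts_k>c_s\|s_k\|^2$; if $k\ge\ell$ remove $(s_m,y_m)$ from storage; stop with output $x_{k+1}$ if $\|\nabla\mathcal{J}(x_{k+1})\|\le\epsilon$; set $z_k=y_k-S_{k+1}s_k$, $\omega^l_{k+1}=\min\{c_0,c_1\|\nabla\mathcal{J}(x_{k+1})\|^{c_2}\}$,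 $\omega^u_{k+1}=\max\{C_0,(c_1\|\nabla\mathcal{J}(x_{k+1})\|^{c_2})^{-1}\}$; with $P(t)=\min\{\max\{t,\omega^l_{k+1}\},\omega^u_{k+1}\}$ and $\rho=z_k^Ts_k$ let $\tau^s=P(\rho/\|s_k\|^2)$, $\tau^g=P(\|z_k\|/\|s_k\|)$, $\tau^z=P(\|z_k\|^2/\rho)$; if $\rho>0$ choose $\tau_{k+1}\in[\tau^s,\tau^z]$, else choose $\tau_{k+1}\in[\tau^s,\tau^g]$. Line searches: Armijo with backtracking means, for fixed $\beta,\sigma\in(0,1)$, $\alpha_k$ is the largest number in $\{1,\beta,\beta^2,\ldots\}$ with $\mathcal{J}(x_{k+1})\le\mathcal{J}(x_k)+\alpha_k\sigma\nabla\mathcal{J}(x_k)^Td_k$; the Wolfe–Powell conditions are this Armijo inequality together with $\nabla\mathcal{J}(x_{k+1})^Td_k\ge\eta\nabla\mathcal{J}(x_k)^Td_k$ for fixed $\eta\in(\sigma,1)$. Let $\Omega=\{x:\mathcal{J}(x)\le\mathcal{J}(x_0)\}$. Standing assumptions: 1) $\mathcal{J}$ is continuously differentiable and bounded below; 2) $\nabla\mathcal{J}$ is Lipschitz continuous on $\Omega$ with constant $L>0$; 3) $(\|S_k\|)$ is bounded; 4) the step sizes consistently satisfy the Armijo condition computed by backtracking, or consistently satisfy the Wolfe–Powell conditions (no uniform continuity assumption on a neighborhood of $\Omega$ is required); 5) $c_0=0$ is only chosen if then $\sup_k\|(B_k^{(0)})^{-1}\|<\infty$; 6) $C_0=\infty$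 is only chosen if either the interval $[\tau^s,\tau^z]$ is replaced by $[\tau^s,\tau^g]$, or $\mathcal{J}$ is twice continuously differentiable, $\int_0^1\nabla^2\mathcal{J}(x_k+ts_k)\,dt-S_{k+1}$ is symmetric positive semi-definite for all $k$ with bounded norms; 7) the algorithm is run with $\epsilon=0$ and generates an infinite sequence $(x_k)$; 8) $(\|B_k\|)$ and $(\|B_k^{-1}\|)$ are bounded. *)

(* Defs.v *)
From HB Require Import structures.
From mathcomp Require Import all_boot all_order all_algebra.
From mathcomp Require Import all_classical all_reals all_analysis.
Set Implicit Arguments. Unset Strict Implicit. Unset Printing Implicit Defensive.
Import Order.TTheory GRing.Theory Num.Theory.
Import numFieldNormedType.Exports.
Local Open Scope classical_set_scope.
Local Open Scope ring_scope.

Section SLBFGS.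
Context {R : realType} {V : normedModType R}.

(** [ip] is an inner product inducing the norm of [V]; together with the
    completeness of [V] (a binder [V : completeNormedModType R] in the
    theorem) this makes [V] a real Hilbert space. *)
Definition inner_product (ip : V -> V -> R) : Prop :=
  [/\ (forall u v, ip u v = ip v u),
      (forall (a : R) u v w, ip (a *: u + v) w = a * ip u w + ip v w)
    & (forall u, `|u| = Num.sqrt (ip u u))].

Variable ip : V -> V -> R.

Definition is_C1_gradient (J : V -> R) (g : V -> V) : Prop :=
  (forall x, differentiable J x /\ forall h, 'd J x h = ip (g x) h)
  /\ continuous g.

Definition is_C2 (g : V -> V) : Prop :=
  (forall x, differentiable g x) /\
  forall x (eps : R), 0 < eps -> exists2 delta : R, 0 < delta &
    forall y, `|y - x| < delta -> forall u, `|'d g y u - 'd g x u| <= eps * `|u|.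

Definition bounded_linear (A : V -> V) : Prop :=
  (forall (a : R) u v, A (a *: u + v) = a *: A u + A v) /\
  exists M : R, forall v, `|A v| <= M * `|v|.

Definition sym_psd (A : V -> V) : Prop :=
  [/\ bounded_linear A, (forall u v, ip (A u) v = ip u (A v))
    & forall v, 0 <= ip (A v) v].

(** one L-BFGS update  B |-> B + y y^T/(y^T s) - B s s^T B/(s^T B s) *)
Definition lbfgs_update (B : V -> V) (s y : V) : V -> V :=
  fun v => B v + (ip y v / ip y s) *: y - (ip (B s) v / ip s (B s)) *: B s.

(** indices j, m <= j <= k-1 (m = max{0,k-l}), of the pairs in storage at
    iteration k: those that satisfied the curvature test y_j^T s_j > c_s |s_j|^2 *)
Definition stored (l : nat) (cs : R) (s y : nat -> V) (k : nat) : seq nat :=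
  [seq j <- iota (k - l) (k - (k - l)) | cs * `|s j| ^+ 2 < ip (y j) (s j)].

Definition lbfgs_matrix (B0 : V -> V) (l : nat) (cs : R) (s y : nat -> V)
    (k : nat) : V -> V :=
  foldl (fun B j => lbfgs_update B (s j) (y j)) B0 (stored l cs s y k).

Definition omega_l (c0 c1 c2 gn : R) : R := Num.min c0 (c1 * gn `^ c2).
Definition omega_u (C0 : \bar R) (c1 c2 gn : R) : \bar R :=
  Order.max C0 ((c1 * gn `^ c2)^-1)%:E.
Definition Pproj (wl : R) (wu : \bar R) (t : R) : \bar R :=
  Order.min (Num.max t wl)%:E wu.

(** The choice of tau_{k+1}.  [gonly = true] is the variant in which the
    interval [tau^s, tau^z] is replaced by [tau^s, tau^g]. *)
Definition tau_rule (gonly : bool) (c0 : R) (C0 : \bar R) (c1 c2 : R)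
    (sk zk gnext : V) (tau_next : R) : Prop :=
  let rho := ip zk sk in
  let P := Pproj (omega_l c0 c1 c2 `|gnext|) (omega_u C0 c1 c2 `|gnext|) in
  let ts := P (rho / `|sk| ^+ 2) in
  let tg := P (`|zk| / `|sk|) in
  let tz := P (`|zk| ^+ 2 / rho) in
  if (0 < rho) && ~~ gonly then (ts <= tau_next%:E <= tz)%E
  else (ts <= tau_next%:E <= tg)%E.

Definition armijo (J : V -> R) (g : V -> V) (sigma : R) (xk dk : V) (a : R) : Prop :=
  J (xk + a *: dk) <= J xk + a * sigma * ip (g xk) dk.

Definition armijo_backtracking (J : V -> R) (g : V -> V) (beta sigma : R)
    (xk dk : V) (a : R) : Prop :=
  exists n : nat, [/\ a = beta ^+ n, armijo J g sigma xk dk (beta ^+ n)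
                    & forall i, (i < n)%N -> ~ armijo J g sigma xk dk (beta ^+ i)].

Definition wolfe_powell (J : V -> R) (g : V -> V) (sigma eta : R)
    (xk dk : V) (a : R) : Prop :=
  armijo J g sigma xk dk a /\ eta * ip (g xk) dk <= ip (g (xk + a *: dk)) dk.

Definition convex_set_seg (N : set V) : Prop :=
  forall a b (t : R), N a -> N b -> 0 <= t <= 1 -> N (t *: a + (1 - t) *: b).

Definition strongly_convex_on (J : V -> R) (N : set V) : Prop :=
  exists2 mu : R, 0 < mu & forall a b (t : R), N a -> N b -> 0 <= t <= 1 ->
    J (t *: a + (1 - t) *: b) <=
      t * J a + (1 - t) * J b - mu / 2 * t * (1 - t) * `|a - b| ^+ 2.

(** averaged Hessian in weak form:  <(int_0^1 H(x + t s) dt) u, v> *)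
Definition avg_hessian_form (g : V -> V) (x s u v : V) : R :=
  (\int[lebesgue_measure]_(t in `[0%R, 1%R]) ip ('d g (x + t *: s) u) v)%R.

End SLBFGS.

(* Main.v *)
Require Import Defs.
From HB Require Import structures.
From mathcomp Require Import all_boot all_order all_algebra.
From mathcomp Require Import all_classical all_reals all_analysis.
From mathcomp Require Import ring lra.
Import Order.TTheory GRing.Theory Num.Theory.
Import numFieldNormedType.Exports.
Local Open Scope classical_set_scope.
Local Open Scope ring_scope.
Section IP.
Context {R : realType} {V : normedModType R} (ip : V -> V -> R).
Hypothesis Hip : inner_product ip.

Lemma ipC u v : ip u v = ip v u.
Proof. by case: Hip. Qed.
Lemma ipZDl a u v w : ip (a *: u + v) w = a * ip u w + ip v w.
Proof. by case: Hip. Qed.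
Lemma ip0l w : ip 0 w = 0.
Proof.
have := ipZDl 1 0 0 w; rewrite addr0 scaler0 mul1r => h; lra.
Qed.
Lemma ipZl a u w : ip (a *: u) w = a * ip u w.
Proof. by have := ipZDl a u 0 w; rewrite addr0 ip0l addr0. Qed.
Lemma ipDl u v w : ip (u + v) w = ip u w + ip v w.
Proof. by have := ipZDl 1 u v w; rewrite scale1r mul1r. Qed.
Lemma ipNl u w : ip (- u) w = - ip u w.
Proof. by rewrite -scaleN1r ipZl mulN1r. Qed.
Lemma ipBl u v w : ip (u - v) w = ip u w - ip v w.
Proof. by rewrite ipDl ipNl. Qed.
Lemma ipZr a u w : ip w (a *: u) = a * ip w u.
Proof. by rewrite ipC ipZl ipC. Qed.
Lemma ipDr u v w : ip w (u + v) = ip w u + ip w v.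
Proof. by rewrite ipC ipDl !(ipC w). Qed.
Lemma ipNr u w : ip w (- u) = - ip w u.
Proof. by rewrite ipC ipNl ipC. Qed.
Lemma ipBr u v w : ip w (u - v) = ip w u - ip w v.
Proof. by rewrite ipDr ipNr. Qed.
Lemma ipZDr a u v w : ip w (a *: u + v) = a * ip w u + ip w v.
Proof. by rewrite ipDr ipZr. Qed.
Lemma ip0r w : ip w 0 = 0.
Proof. by rewrite ipC ip0l. Qed.

Lemma ipvv u : ip u u = `|u| ^+ 2.
Proof.
case: Hip => _ _ /(_ u) ->.
have [h|h] := leP 0 (ip u u); first by rewrite sqr_sqrtr.
have : `|u| = 0 by case: Hip => _ _ /(_ u) ->; rewrite ltr0_sqrtr.
move/eqP; rewrite normr_eq0 => /eqP u0.
by move: h; rewrite u0 ip0l ltxx.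
Qed.

Lemma quad_cs (a b c : R) : 0 <= c ->
  (forall t, 0 <= a - 2 * t * b + t ^+ 2 * c) -> b ^+ 2 <= a * c.
Proof.
move=> c0 H.
have a0 : 0 <= a.
  have := H 0; suff -> : a - 2 * 0 * b + 0 ^+ 2 * c = a by [].
  by rewrite expr0n /= mulr0 !mul0r subr0 addr0.
have [cp|] := ltP 0 c.
  have := H (b / c).
  have -> : a - 2 * (b / c) * b + (b / c) ^+ 2 * c = a - b ^+ 2 / c.
    by field; rewrite gt_eqF.
  rewrite subr_ge0 ler_pdivrMr //.
rewrite le_eqVlt ltNge c0 orbF => /eqP c00.
rewrite c00 mulr0.
have [b0|bn0] := eqVneq b 0; first by rewrite b0 expr0n.
have := H ((a + 1) / (2 * b)).
have -> : a - 2 * ((a + 1) / (2 * b)) * b + ((a + 1) / (2 * b)) ^+ 2 * c = -1.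
  by rewrite c00 mulr0 addr0; field.
move=> h; lra.
Qed.

Definition good (A : V -> V) :=
  [/\ (forall a u v, A (a *: u + v) = a *: A u + A v),
      (forall u v, ip (A u) v = ip u (A v))
    & (forall v, 0 <= ip (A v) v)].

Lemma good_cs A : good A -> forall u w,
  ip (A u) w ^+ 2 <= ip (A u) u * ip (A w) w.
Proof.
case=> lin sym psd u w.
apply: quad_cs; first exact: psd.
move=> t.
have := psd ((- t) *: w + u).
rewrite lin ipZDl !ipDr !ipZr.
have e1 : ip (A w) u = ip (A u) w by rewrite sym ipC.
rewrite e1.
suff -> : - t * (- t * ip (A w) w + ip (A u) w) + (- t * ip (A u) w + ip (A u) u)
  = ip (A u) u - 2 * t * ip (A u) w + t ^+ 2 * ip (A w) w by [].
by ring.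
Qed.

Lemma good_id : good id.
Proof. by split=> // v; rewrite ipvv exprn_ge0. Qed.

Lemma ip_cs u w : `|ip u w| <= `|u| * `|w|.
Proof.
have := @good_cs id good_id u w; rewrite /= !ipvv -real_normK ?num_real //.
have := normr_ge0 (ip u w); have := normr_ge0 u; have := normr_ge0 w.
rewrite -exprMn; move=> h1 h2 h3 h4.
have h5 : 0 <= `|u| * `|w| by apply: mulr_ge0.
move: h3 h4 h5; set a := `|ip u w|; set b := `|u| * `|w|.
move=> h3 h4 h5; rewrite leNgt; apply/negP => h6.
have : b * b < a * a.
  apply: (le_lt_trans (y := b * a)); first by apply: ler_wpM2l => //; lra.
  by rewrite ltr_pM2r //; lra.
rewrite -!expr2; lra.
Qed.

Lemma zmod4 (W : zmodType) (x1 x2 y1 y2 z1 z2 : W) :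
  x1 + x2 + (y1 + y2) - (z1 + z2) = (x1 + y1 - z1) + (x2 + y2 - z2).
Proof. by rewrite addrACA opprD (addrACA (x1 + y1)). Qed.

Lemma good_update B s y : good B -> 0 < ip y s -> good (lbfgs_update ip B s y).
Proof.
case=> lin sym psd ys; rewrite /lbfgs_update; split.
- move=> a u v; rewrite lin !ipZDr.
  set c := ip y s; set e := ip s (B s).
  rewrite !mulrDl -!mulrA !scalerDl scalerBr scalerDr -!scalerA.
  exact: zmod4.
- move=> u v; rewrite !ipDl !ipNl !ipZl !ipDr !ipNr !ipZr sym.
  rewrite [ip (B s) v]ipC [ip (B s) u]ipC -!sym [ip y v]ipC [ip y u]ipC.
  ring.
- move=> v; rewrite !ipDl !ipNl !ipZl.
  set c := ip y s; set e := ip s (B s).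
  have e0 : 0 <= e by rewrite /e ipC psd.
  have hcs := @good_cs B (And3 lin sym psd) v s.
  have -> : ip (B s) v = ip (B v) s by rewrite sym ipC.
  have hy : 0 <= ip y v / c * ip y v.
    by rewrite mulrAC -expr2; apply: divr_ge0; [apply: sqr_ge0 | apply: ltW].
  have [e00|ep] := eqVneq e 0.
    by rewrite e00 invr0 mulr0 mul0r subr0; apply: addr_ge0.
  have ep' : 0 < e by rewrite lt_def ep e0.
  have : ip (B v) s / e * ip (B v) s <= ip (B v) v.
    rewrite mulrAC -expr2 ler_pdivrMr //.
    have ee : e = ip (B s) s by rewrite /e ipC.
    by rewrite ee.
  move=> h; lra.
Qed.

Lemma good_foldl (B : V -> V) (js : seq nat) (s y : nat -> V) : good B ->
  (forall j, j \in js -> 0 < ip (y j) (s j)) ->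
  good (foldl (fun B j => lbfgs_update ip B (s j) (y j)) B js).
Proof.
elim: js B => //= j js IH B gB H; apply: IH.
  by apply: good_update => //; apply: H; rewrite inE eqxx.
by move=> i hi; apply: H; rewrite inE hi orbT.
Qed.

Lemma good_bound A C : good A -> 0 < C -> (forall w, `|A w| <= C * `|w|) ->
  forall v, `|A v| ^+ 2 <= C * ip (A v) v.
Proof.
move=> gA C0 HA v.
have hcs := @good_cs A gA v (A v).
case: gA => lin sym psd.
rewrite ipvv in hcs.
have h1 : ip (A (A v)) (A v) <= C * `|A v| ^+ 2.
  apply: le_trans (ler_norm _) _.
  apply: le_trans (ip_cs _ _) _.
  rewrite expr2 mulrA; apply: ler_wpM2r => //.
have q0 := psd v.
have W0 : 0 <= `|A v| ^+ 2 by apply: sqr_ge0.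
move: hcs h1 q0 W0; set W := `|A v| ^+ 2; set q := ip (A v) v; set P := ip (A (A v)) (A v).
move=> h1 h2 h3 h4.
have [W00|Wn] := eqVneq W 0; first by rewrite W00; apply: mulr_ge0 => //; apply: ltW.
have Wp : 0 < W by rewrite lt_def Wn h4.
have : W * W <= (C * q) * W.
  rewrite -expr2; apply: (le_trans h1).
  by rewrite (mulrC C q) -mulrA; apply: ler_wpM2l.
by rewrite ler_pM2r.
Qed.

Variables (J : V -> R) (g : V -> V).
Hypothesis HJ : is_C1_gradient ip J g.

Lemma phi_derive (z h : V) (tau : R) :
  is_derive tau 1 (fun t : R => J (z + t *: h)) (ip (g (z + tau *: h)) h).
Proof.
have [dJ dv] := HJ.1 (z + tau *: h).
have eqf : (fun u : R => u^-1 *: (((fun t : R => J (z + t *: h)) \o shift tau) (u *: 1)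
                 - (fun t : R => J (z + t *: h)) tau))
   = (fun u : R => u^-1 *: ((J \o shift (z + tau *: h)) (u *: h) - J (z + tau *: h))).
  apply: funext => u /=; congr (_ *: (J _ - _)).
  rewrite -[u *: (1 : R)]/(u * 1) mulr1 scalerDl addrCA; done.
apply: DeriveDef.
  by rewrite /derivable eqf; apply: diff_derivable.
by rewrite /derive eqf -/(derive J (z + tau *: h) h) deriveE // dv.
Qed.

Lemma mvt_dir (z h : V) (T c : R) : 0 < T -> T * c < J (z + T *: h) - J z ->
  exists2 xi, 0 <= xi <= T & c < ip (g (z + xi *: h)) h.
Proof.
move=> T0 hT.
have hc : continuous (fun t : R => J (z + t *: h)).
  move=> t; apply: differentiable_continuous; apply/derivable1_diffP.
  exact: (@ex_derive _ _ _ _ _ _ _ (phi_derive z h t)).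
have [xi xiT eq] := @MVT_segment R (fun t : R => J (z + t *: h))
   (fun t => ip (g (z + t *: h)) h) 0 T (ltW T0) (fun t _ => phi_derive z h t)
   (continuous_subspaceT hc).
exists xi; first by move: xiT; rewrite in_itv.
move: eq hT; rewrite /= scale0r addr0 subr0 => ->.
by rewrite mulrC ltr_pM2r.
Qed.

Lemma dq_le (z h : V) (A B : R) :
  (forall t, 0 < t <= 1 -> J (z + t *: h) - J z <= t * (A + B * t)) ->
  ip (g z) h <= A.
Proof.
move=> H.
have [dJ dv] := HJ.1 z.
have Hd : derivable J z h by apply: diff_derivable.
have Hc : (fun t : R => t^-1 *: ((J \o shift z) (t *: h) - J z)) @ 0^' --> 'D_h J z := Hd.
rewrite deriveE // dv in Hc.
rewrite leNgt; apply/negP => hA.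
set D := ip (g z) h in Hc hA.
pose e := (D - A) / 2.
have e0 : 0 < e by rewrite /e divr_gt0 // subr_gt0.
move/cvgrPdist_lt: Hc => /(_ e e0); rewrite near_withinE => /nbhs_ballP [del del0 Hb].
pose t := Num.min (del / 2) (Num.min 1 (e / (`|B| + 1))).
have B1 : 0 < `|B| + 1 by apply: ltr_pwDr.
have t0 : 0 < t by rewrite /t !lt_min divr_gt0 // (divr_gt0 e0 B1) ltr01.
have t1 : t <= 1 by rewrite /t !ge_min lexx orbT.
have te : t <= e / (`|B| + 1) by rewrite /t !ge_min lexx !orbT.
have tdel : t < del.
  apply: (le_lt_trans (y := del / 2)); first by rewrite /t ge_min lexx.
  by rewrite ltr_pdivrMr // ltr_pMr //; lra.
have := Hb t; rewrite /ball /= sub0r normrN gtr0_norm // => /(_ tdel) /(_ (lt0r_neq0 t0)).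
rewrite /= -[t^-1 *: _]/(t^-1 * _) [t *: h + z]addrC.
have Ht : J (z + t *: h) - J z <= t * (A + B * t) by apply: H; rewrite t0 t1.
have hq : t^-1 * (J (z + t *: h) - J z) <= A + B * t.
  by rewrite ler_pdivrMl.
have hBt : B * t < e.
  apply: (le_lt_trans (ler_norm _)); rewrite normrM (gtr0_norm t0).
  apply: (le_lt_trans (y := `|B| * (e / (`|B| + 1)))); first by apply: ler_wpM2l.
  rewrite mulrA ltr_pdivrMr // mulrDr mulr1; lra.
move=> hlt.
have := ler_norm (D - t^-1 * (J (z + t *: h) - J z)); rewrite /e in hBt hlt.
lra.
Qed.
End IP.

Lemma cont_ball {R : realType} {V W : normedModType R} (f : V -> W) (p : V) :
  {for p, continuous f} -> forall e : R, 0 < e ->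
  exists2 del : R, 0 < del & forall v, `|p - v| < del -> `|f p - f v| < e.
Proof.
move=> cf e e0.
have := cf; move/cvgrPdist_lt => /(_ e e0) /nbhs_ballP [del del0 Hb].
exists del => // v hv; apply: Hb; by rewrite -ball_normE /ball_ /=.
Qed.

Lemma cluster_ex {R : realType} {V : normedModType R} (x : nat -> V) (p : V) :
  cluster (x @ \oo) p -> forall (K : nat) (e : R), 0 < e ->
  exists k, (K <= k)%N /\ `|p - x k| < e.
Proof.
move=> Hcl K e e0.
have := Hcl [set v | exists2 k, (K <= k)%N & v = x k] (ball p e).
case.
- by exists K => // k /= hk; exists k.
- exact: nbhsx_ballx.
move=> v [[k hk ->]]; rewrite -ball_normE /ball_ /= => hb.
by exists k.
Qed.

Lemma cancel_sq {R : realType} (a b G : R) : 0 < a -> 0 <= b -> 0 <= G ->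
  a * G ^+ 2 <= b * G -> G <= b / a.
Proof.
move=> a0 b0 G0 h.
have [->|Gn] := eqVneq G 0; first by apply: divr_ge0 => //; apply: ltW.
have Gp : 0 < G by rewrite lt_def Gn G0.
by rewrite ler_pdivlMr //; move: h; rewrite expr2 mulrA ler_pM2r // mulrC.
Qed.
Theorem lemma4p14
  (R : realType) (V : completeNormedModType R) (ip : V -> V -> R)
  (J : V -> R) (g : V -> V)
  (l : nat) (c0 : R) (C0 : \bar R) (cs c1 c2 : R) (gonly : bool)
  (beta sigma eta L : R)
  (x : nat -> V) (S : nat -> V -> V) (tau alpha : nat -> R) (d : nat -> V)
  (xstar : V) (N : set V) :
  let Omega := [set v | J v <= J (x 0%N)] in
  let s := fun k => x k.+1 - x k in
  let y := fun k => g (x k.+1) - g (x k) in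
  let B0 := fun k (v : V) => tau k *: v + S k v in
  let B := fun k => lbfgs_matrix ip (B0 k) l cs s y k in
  (* V is a real Hilbert space *)
  inner_product ip ->
  (* parameters of the algorithm *)
  0 <= c0 -> (c0%:E <= C0)%E -> 0 < cs -> 0 < c1 -> 0 < c2 -> 0 < tau 0%N ->
  (* the iteration of SLBFGS *)
  (forall k, sym_psd ip (S k)) ->
  (forall k, B k (d k) = - g (x k)) ->
  (forall k, 0 < alpha k) ->
  (forall k, x k.+1 = x k + alpha k *: d k) ->
  (forall k, tau_rule ip gonly c0 C0 c1 c2 (s k) (y k - S k.+1 (s k))
                      (g (x k.+1)) (tau k.+1)) ->
  (* 1) J is C^1 with gradient g, and bounded below *)
  is_C1_gradient ip J g ->
  (exists m : R, forall v, m <= J v) ->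
  (* 2) g is L-Lipschitz on Omega *)
  0 < L -> (forall u v, Omega u -> Omega v -> `|g u - g v| <= L * `|u - v|) ->
  (* 3) (||S_k||) bounded *)
  (exists M : R, forall k v, `|S k v| <= M * `|v|) ->
  (* 4) line search *)
  0 < beta < 1 -> 0 < sigma < 1 -> sigma < eta < 1 ->
  ((forall k, armijo_backtracking ip J g beta sigma (x k) (d k) (alpha k)) \/
   (forall k, wolfe_powell ip J g sigma eta (x k) (d k) (alpha k))) ->
  (* 5) c0 = 0 only if sup_k ||(B_k^(0))^-1|| < oo *)
  (c0 = 0 -> exists C : R, forall k, (forall w, exists v, B0 k v = w) /\
                                     (forall v, `|v| <= C * `|B0 k v|)) ->
  (* 6) C0 = oo only if the [tau^s,tau^g] variant is used, or J is C^2 and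
        int_0^1 J''(x_k + t s_k) dt - S_{k+1} is symmetric psd with bounded norms *)
  (C0 = +oo%E -> gonly \/
     (is_C2 g /\ exists M : R, forall k u v,
        let a := fun u v => avg_hessian_form ip g (x k) (s k) u v - ip (S k.+1 u) v in
        [/\ a u v = a v u, 0 <= a u u & `|a u v| <= M * `|u| * `|v|])) ->
  (* 7) epsilon = 0 and the sequence is infinite: the stopping test never fires *)
  (forall k, g (x k.+1) <> 0) ->
  (* 8) (||B_k||) and (||B_k^-1||) bounded *)
  (exists C : R, forall k, (forall w, exists v, B k v = w) /\
       (forall v, `|B k v| <= C * `|v| /\ `|v| <= C * `|B k v|)) ->
  (* the lemma *)
  cluster (x @ \oo) xstar ->
  N `<=` Omega -> nbhs xstar N -> convex_set_seg N ->
  strongly_convex_on J N ->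
  x @ \oo --> xstar.
Proof.
move=> Omega s y B0 B Hip c0_ge0 C0c0 cs0 c10 c20 tau00 HS HBd Halpha Hx Htau HJ
  [m Hm] L0 HLip HSb Hbeta Hsigma Heta HLS H5 H6 Hg7 [C HC] Hcl HNO HN HNc [mu mu0 Hsc].
have sE : forall k, s k = alpha k *: d k.
  by move=> k; rewrite /s Hx addrC addKr.
have tau_ge0 : forall k, 0 <= tau k.
  case=> [|k]; first exact: ltW.
  have Pge0 : forall gn t, (0%:E <= Pproj (omega_l c0 c1 c2 gn) (omega_u C0 c1 c2 gn) t)%E.
    move=> gn t; rewrite /Pproj le_min; apply/andP; split.
      rewrite lee_fin le_max; apply/orP; right.
      rewrite /omega_l le_min c0_ge0 /=; apply: mulr_ge0; [exact: ltW | exact: powR_ge0].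
    rewrite /omega_u le_max; apply/orP; left; apply: le_trans C0c0; by rewrite lee_fin.
  have := Htau k; rewrite /tau_rule /=.
  by case: ifP => _ /andP [h _]; rewrite -lee_fin; apply: le_trans h; apply: Pge0.
have gB : forall k, good ip (B k).
  move=> k; rewrite /B /lbfgs_matrix; apply: good_foldl => //.
    have [[Slin _] Ssym Spsd] := HS k.
    split.
    - move=> a u v; rewrite /B0 Slin !scalerDr !scalerA (mulrC (tau k) a).
      by rewrite addrACA.
    - by move=> u v; rewrite /B0 (ipDl _ Hip) (ipZl _ Hip) (ipDr _ Hip) (ipZr _ Hip) Ssym.
    - move=> v; rewrite /B0 (ipDl _ Hip) (ipZl _ Hip); apply: addr_ge0 => //.
      by apply: mulr_ge0 => //; rewrite (ipvv _ Hip) sqr_ge0.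
  move=> j; rewrite mem_filter => /andP [h _]; apply: le_lt_trans h.
  by apply: mulr_ge0; [exact: ltW | exact: sqr_ge0].
pose Cb := Num.max C 1.
have Cb1 : 1 <= Cb by rewrite /Cb le_max lexx orbT.
have Cb0 : 0 < Cb by apply: lt_le_trans Cb1.
have HB1 : forall k v, `|B k v| <= Cb * `|v|.
  move=> k v; apply: le_trans ((HC k).2 v).1 _; apply: ler_wpM2r => //.
  by rewrite /Cb le_max lexx.
have HB2 : forall k v, `|v| <= Cb * `|B k v|.
  move=> k v; apply: le_trans ((HC k).2 v).2 _; apply: ler_wpM2r => //.
  by rewrite /Cb le_max lexx.
have hd1 : forall k, `|d k| <= Cb * `|g (x k)|.
  by move=> k; have := HB2 k (d k); rewrite HBd normrN.
have hd2 : forall k, `|g (x k)| <= Cb * `|d k|.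
  by move=> k; have := HB1 k (d k); rewrite HBd normrN.
have hd3 : forall k, `|g (x k)| ^+ 2 <= Cb * (- ip (g (x k)) (d k)).
  move=> k; have := @good_bound _ _ _ Hip _ _ (gB k) Cb0 (HB1 k) (d k).
  by rewrite HBd normrN (ipNl _ Hip).
have hP0 : forall k, ip (g (x k)) (d k) <= 0.
  move=> k; have := hd3 k; have := sqr_ge0 `|g (x k)|.
  move=> h1 h2; rewrite -oppr_ge0 -(pmulr_rge0 _ Cb0); lra.
have Harm : forall k, J (x k.+1) <= J (x k) + alpha k * sigma * ip (g (x k)) (d k).
  case: HLS => H k.
    by case: (H k) => n [ea ha _]; rewrite Hx ea.
  by case: (H k) => ha _; rewrite Hx.
have sig0 : 0 < sigma by case/andP: Hsigma.
have sig1 : sigma < 1 by case/andP: Hsigma.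
have hdec : forall k, sigma * `|s k| * `|g (x k)| <= Cb ^+ 2 * (J (x k) - J (x k.+1)).
  move=> k; rewrite sE normrZ (gtr0_norm (Halpha k)).
  have a0 := Halpha k; have h1 := Harm k; have h3 := hd3 k; have h4 := hd1 k.
  move: h1 h3 h4; set a := alpha k; set G := `|g (x k)|; set Dn := `|d k|.
  set P := ip (g (x k)) (d k); move=> h1 h3 h4.
  have G0 : 0 <= G by apply: normr_ge0.
  have sa0 : 0 <= sigma * a * G by apply: mulr_ge0 => //; apply: mulr_ge0; apply: ltW.
  apply: (le_trans (y := Cb * (sigma * a) * G ^+ 2)).
    have -> : sigma * (a * Dn) * G = (sigma * a * G) * Dn by ring.
    have -> : Cb * (sigma * a) * G ^+ 2 = (sigma * a * G) * (Cb * G) by ring.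
    by apply: ler_wpM2l.
  apply: (le_trans (y := Cb * (sigma * a) * (Cb * (- P)))).
    apply: ler_wpM2l => //; apply: mulr_ge0; [exact: ltW|apply: mulr_ge0; exact: ltW].
  have -> : Cb * (sigma * a) * (Cb * (- P)) = Cb ^+ 2 * (- (a * sigma * P)) by ring.
  apply: ler_wpM2l; [exact: sqr_ge0 | lra].
have hmono1 : forall k, J (x k.+1) <= J (x k).
  move=> k; have := hdec k; have := sqr_ge0 Cb.
  have : 0 <= sigma * `|s k| * `|g (x k)|.
    by apply: mulr_ge0 => //; apply: mulr_ge0 => //; apply: ltW.
  move=> h1 h2 h3; have h4 : 0 <= Cb ^+ 2 * (J (x k) - J (x k.+1)) by lra.
  by move: h4; rewrite pmulr_rge0 ?exprn_gt0 // subr_ge0.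
have hmono : forall k n, J (x (k + n)%N) <= J (x k).
  move=> k; elim=> [|n IH]; first by rewrite addn0.
  by rewrite addnS; apply: le_trans (hmono1 _) IH.
have contJ : {for xstar, continuous J}.
  by apply: differentiable_continuous; exact: (HJ.1 xstar).1.
have contg : {for xstar, continuous g} by apply: HJ.2.
have Jlow : forall k, J xstar <= J (x k).
  move=> k; rewrite leNgt; apply/negP => hk.
  have hk' : 0 < J xstar - J (x k) by rewrite subr_gt0.
  have [del del0 Hdel] := cont_ball _ _ contJ _ hk'.
  have [n [kn hn]] := cluster_ex _ _ Hcl k _ del0.
  have := Hdel _ hn; have := hmono k (n - k)%N; rewrite subnKC //.
  move=> h1 h2; have := ler_norm (J xstar - J (x n)); lra.
have [r r0 Hr] := (nbhs_ballP _ _).1 HN.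
have r0' : 0 < r := r0.
have inN : forall v, `|xstar - v| < r -> N v.
  by move=> v hv; apply: Hr; rewrite -ball_normE /ball_ /=.
have Nstar : N xstar by apply: inN; rewrite subrr normr0.
have P4 : forall k, `|xstar - x k| < r -> sigma * `|s k| <= Cb ^+ 2 * `|xstar - x k|.
  move=> k hk; have Nk := inN _ hk.
  have hconv : ip (g (x k)) (xstar - x k) <= J xstar - J (x k).
    apply: (@dq_le _ _ ip J g HJ (x k) (xstar - x k) _ 0) => t /andP [t0 t1].
    have := Hsc xstar (x k) t Nstar Nk.
    have -> : t *: xstar + (1 - t) *: x k = x k + t *: (xstar - x k).
      by rewrite scalerBl scale1r scalerBr addrCA.
    have hM : 0 <= mu / 2 * t * (1 - t) * `|xstar - x k| ^+ 2.
      apply: mulr_ge0; last exact: sqr_ge0.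
      apply: mulr_ge0; last lra.
      apply: mulr_ge0; last exact: ltW.
      by apply: divr_ge0; [exact: ltW|].
    rewrite ltW //= t1 => /(_ isT) h; rewrite mul0r addr0; lra.
  have hcs := ip_cs _ Hip (g (x k)) (xstar - x k).
  have hd := hdec k; have Jl := Jlow k.+1.
  have hn := ler_norm (- ip (g (x k)) (xstar - x k)); rewrite normrN in hn.
  have key : sigma * `|s k| * `|g (x k)| <= (Cb ^+ 2 * `|xstar - x k|) * `|g (x k)|.
    apply: le_trans hd _; rewrite -mulrA; apply: ler_wpM2l; first exact: sqr_ge0.
    rewrite mulrC; lra.
  have [G0|Gn] := eqVneq `|g (x k)| 0.
    have : `|s k| <= 0.
      rewrite sE normrZ (gtr0_norm (Halpha k)).
      apply: le_trans (ler_wpM2l (ltW (Halpha k)) (hd1 k)) _.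
      by rewrite G0 !mulr0.
    move=> h; have hs : `|s k| = 0 by apply/eqP; rewrite eq_le h normr_ge0.
    rewrite hs mulr0; apply: mulr_ge0; [exact: sqr_ge0|exact: normr_ge0].
  have Gp : 0 < `|g (x k)| by rewrite lt_def Gn normr_ge0.
  by move: key; rewrite ler_pM2r.
have eta1 : eta < 1 by case/andP: Heta.
have b0 : 0 < beta by case/andP: Hbeta.
have b1 : beta < 1 by case/andP: Hbeta.
have Cb2 : 0 < Cb ^+ 2 by apply: exprn_gt0.
have gstar0 : g xstar = 0.
  pose K1 := 2 * Cb ^+ 2 / (1 - eta) + Cb ^+ 3 / sigma + 2 * Cb ^+ 2 / (1 - sigma).
  have K10 : 0 <= K1.
    rewrite /K1; apply: addr_ge0; first apply: addr_ge0.
    - apply: divr_ge0; [apply: mulr_ge0 => //; exact: ltW | lra].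
    - apply: divr_ge0; [apply: exprn_ge0; exact: ltW | exact: ltW].
    - apply: divr_ge0; [apply: mulr_ge0 => //; exact: ltW | lra].
  have e1 : 0 < 1 - eta by lra.
  have e2 : 0 < 1 - sigma by lra.
  have hK1a : 2 * Cb ^+ 2 / (1 - eta) <= K1.
    rewrite /K1 -addrA lerDl; apply: addr_ge0.
    - apply: divr_ge0; [apply: exprn_ge0; exact: ltW | exact: ltW].
    - apply: divr_ge0; [apply: mulr_ge0 => //; exact: ltW | lra].
  have hK1b : Cb ^+ 3 / sigma <= K1.
    rewrite /K1 addrAC lerDr; apply: addr_ge0.
    - apply: divr_ge0; [apply: mulr_ge0 => //; exact: ltW | lra].
    - apply: divr_ge0; [apply: mulr_ge0 => //; exact: ltW | lra].
  have hK1c : 2 * Cb ^+ 2 / (1 - sigma) <= K1.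
    rewrite /K1 lerDr; apply: addr_ge0.
    - apply: divr_ge0; [apply: mulr_ge0 => //; exact: ltW | lra].
    - apply: divr_ge0; [apply: exprn_ge0; exact: ltW | exact: ltW].
  suff Hsuff : forall e, 0 < e -> `|g xstar| <= (1 + K1) * e.
    apply/eqP; rewrite -normr_eq0; apply/eqP.
    have K0p : 0 < 1 + K1 by lra.
    apply: le_anti; rewrite normr_ge0 andbT leNgt; apply/negP => hp.
    have hpos : 0 < `|g xstar| / (2 * (1 + K1)) by apply: divr_gt0 => //; lra.
    have := Hsuff _ hpos.
    have -> : (1 + K1) * (`|g xstar| / (2 * (1 + K1))) = `|g xstar| / 2.
      by field; lra.
    lra.
  move=> e e0.
  have [del del0 Hdel] := cont_ball _ _ contg _ e0.
  pose Q := 1 + Cb ^+ 2 / sigma + Cb ^+ 2 / (sigma * beta).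
  have q1 : 0 <= Cb ^+ 2 / sigma by apply: divr_ge0; [exact: ltW|exact: ltW].
  have q2 : 0 <= Cb ^+ 2 / (sigma * beta).
    by apply: divr_ge0; [exact: ltW|apply: mulr_ge0; exact: ltW].
  have Q1 : 1 <= Q by rewrite /Q -addrA lerDl; apply: addr_ge0.
  pose mm := Num.min r (Num.min del e).
  have mm0 : 0 < mm by rewrite /mm !lt_min r0 del0 e0.
  have mmr : mm <= r by rewrite /mm ge_min lexx.
  have mmd : mm <= del by rewrite /mm !ge_min lexx orbT.
  have mme : mm <= e by rewrite /mm !ge_min lexx !orbT.
  pose rho := mm / (2 * Q).
  have Q0 : 0 < Q by lra.
  have rho0 : 0 < rho by apply: divr_gt0 => //; lra.
  have rhoQ : rho * Q = mm / 2 by rewrite /rho; field; lra.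
  have rhomm : rho <= mm / 2.
    rewrite -rhoQ; rewrite -[X in X <= _]mulr1; apply: ler_wpM2l => //; exact: ltW.
  have [k [_ hk]] := cluster_ex _ _ Hcl 0%N _ rho0.
  have hkr : `|xstar - x k| < r by lra.
  have hsk : `|s k| <= Cb ^+ 2 / sigma * rho.
    rewrite -(ler_pM2l sig0).
    have -> : sigma * (Cb ^+ 2 / sigma * rho) = Cb ^+ 2 * rho by field; lra.
    apply: le_trans (P4 k hkr) _; apply: ler_wpM2l; [exact: ltW|exact: ltW].
  have hgk : `|g xstar - g (x k)| < e by apply: Hdel; lra.
  have curv : forall (c : R) (w : V), c < 1 -> `|g xstar - g w| < e ->
      (1 - c) * (- ip (g (x k)) (d k)) <= ip (g w - g (x k)) (d k) ->
      `|g (x k)| <= 2 * e * Cb ^+ 2 / (1 - c).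
    move=> c w cc1 hw hc.
    have hcs := ip_cs _ Hip (g w - g (x k)) (d k).
    have hD : `|g w - g (x k)| <= 2 * e.
      have -> : g w - g (x k) = (g xstar - g (x k)) - (g xstar - g w).
        by rewrite opprB [RHS]addrC addrA subrK.
      apply: le_trans (ler_normB _ _) _; lra.
    apply: cancel_sq; [lra | apply: mulr_ge0; [lra|exact: ltW] | exact: normr_ge0|].
    apply: (le_trans (y := (1 - c) * (Cb * (- ip (g (x k)) (d k))))).
      by apply: ler_wpM2l; [lra | exact: hd3].
    apply: (le_trans (y := Cb * ip (g w - g (x k)) (d k))).
      by rewrite mulrCA; apply: ler_wpM2l; [exact: ltW|].
    apply: (le_trans (y := Cb * (`|g w - g (x k)| * `|d k|))).
      by apply: ler_wpM2l; [exact: ltW|apply: le_trans (ler_norm _) hcs].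
    apply: (le_trans (y := Cb * ((2 * e) * (Cb * `|g (x k)|)))).
      apply: ler_wpM2l; first exact: ltW.
      by apply: ler_pM => //; exact: hd1.
    have -> : Cb * ((2 * e) * (Cb * `|g (x k)|)) = 2 * e * Cb ^+ 2 * `|g (x k)| by ring.
    by [].
  suff hG : `|g (x k)| <= K1 * e.
    have := ler_normD (g xstar - g (x k)) (g (x k)); rewrite subrK.
    move=> h; rewrite mulrDl mul1r; lra.
  have hQ : rho * Q = rho + Cb ^+ 2 / sigma * rho + Cb ^+ 2 / (sigma * beta) * rho.
    by rewrite /Q; ring.
  have hq1 : 0 <= Cb ^+ 2 / sigma * rho by apply: mulr_ge0 => //; exact: ltW.
  have hq2 : 0 <= Cb ^+ 2 / (sigma * beta) * rho by apply: mulr_ge0 => //; exact: ltW.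
  case: HLS => H.
  - case: (H k) => n [ea ha hna].
    case: n ea ha hna => [|n] ea ha hna.
    + have sdk : s k = d k by rewrite sE ea expr0 scale1r.
      apply: le_trans (hd2 k) _; rewrite -sdk.
      apply: (le_trans (y := Cb ^+ 3 / sigma * e)); last by apply: ler_wpM2r; [exact: ltW|].
      apply: (le_trans (y := Cb * (Cb ^+ 2 / sigma * rho))).
        by apply: ler_wpM2l; [exact: ltW|].
      have -> : Cb * (Cb ^+ 2 / sigma * rho) = Cb ^+ 3 / sigma * rho by ring.
      apply: ler_wpM2l; last lra.
      by apply: divr_ge0; [apply: exprn_ge0; exact: ltW|exact: ltW].
    + have T0 : 0 < beta ^+ n by apply: exprn_gt0.
      have hT : beta ^+ n * (sigma * ip (g (x k)) (d k)) < J (x k + beta ^+ n *: d k) - J (x k).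
        have := hna n (ltnSn n); rewrite /armijo => hn.
        rewrite ltNge; apply/negP => h; apply: hn; move: h; rewrite mulrA => h; lra.
      have [xi /andP [xi0 xiT] hxi] := @mvt_dir _ _ ip J g HJ (x k) (d k) _ _ T0 hT.
      have hTd : beta ^+ n * `|d k| <= Cb ^+ 2 / (sigma * beta) * rho.
        rewrite -(ler_pM2l b0).
        have -> : beta * (Cb ^+ 2 / (sigma * beta) * rho) = Cb ^+ 2 / sigma * rho.
          by field; apply/andP; split; lra.
        apply: le_trans hsk.
        have hb : 0 <= beta ^+ n.+1 by apply: exprn_ge0; apply: ltW.
        by rewrite sE ea normrZ (ger0_norm hb) exprS mulrA.
      have hxd : xi * `|d k| <= beta ^+ n * `|d k| by apply: ler_wpM2r.
      apply: le_trans (curv sigma (x k + xi *: d k) sig1 _ _) _.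
      * apply: Hdel.
        have -> : xstar - (x k + xi *: d k) = (xstar - x k) - xi *: d k by rewrite opprD addrA.
        apply: le_lt_trans (ler_normB _ _) _; rewrite normrZ ger0_norm //.
        lra.
      * by rewrite (ipBl _ Hip); lra.
      have -> : 2 * e * Cb ^+ 2 / (1 - sigma) = (2 * Cb ^+ 2 / (1 - sigma)) * e by ring.
      by apply: ler_wpM2r; [exact: ltW|].
  - case: (H k) => _ hw; rewrite -Hx in hw.
    apply: le_trans (curv eta (x k.+1) eta1 _ _) _.
    + apply: Hdel.
      have -> : xstar - x k.+1 = (xstar - x k) - s k by rewrite /s opprB addrA subrK.
      apply: le_lt_trans (ler_normB _ _) _.
      lra.
    + by rewrite (ipBl _ Hip); lra.
    have -> : 2 * e * Cb ^+ 2 / (1 - eta) = (2 * Cb ^+ 2 / (1 - eta)) * e by ring.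
    by apply: ler_wpM2r; [exact: ltW|].
have quad : forall v, N v -> mu / 2 * `|v - xstar| ^+ 2 <= J v - J xstar.
  move=> v Nv.
  have := @dq_le _ _ ip J g HJ xstar (v - xstar)
    (J v - J xstar - mu / 2 * `|v - xstar| ^+ 2) (mu / 2 * `|v - xstar| ^+ 2).
  rewrite gstar0 (ip0l _ Hip) => H.
  suff : 0 <= J v - J xstar - mu / 2 * `|v - xstar| ^+ 2 by rewrite subr_ge0.
  apply: H => t /andP [t0 t1].
  have := Hsc v xstar t Nv Nstar; rewrite ltW //= t1 => /(_ isT).
  have -> : t *: v + (1 - t) *: xstar = xstar + t *: (v - xstar).
    by rewrite scalerBl scale1r scalerBr addrCA.
  move=> h.
  have -> : t * (J v - J xstar - mu / 2 * `|v - xstar| ^+ 2 + mu / 2 * `|v - xstar| ^+ 2 * t)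
     = t * J v + (1 - t) * J xstar - mu / 2 * t * (1 - t) * `|v - xstar| ^+ 2 - J xstar.
    by ring.
  by rewrite lerD2r.
apply/cvgrPdist_lt => e e0.
pose Q1 := 1 + Cb ^+ 2 / sigma.
have q1 : 0 <= Cb ^+ 2 / sigma by apply: divr_ge0; [exact: ltW|exact: ltW].
have Q10 : 0 < Q1 by rewrite /Q1 (lt_le_trans ltr01) // lerDl.
pose rho := Num.min e (r / (2 * Q1)).
have rho0 : 0 < rho by rewrite /rho lt_min e0 /=; apply: divr_gt0 => //; apply: mulr_gt0.
have rhoe : rho <= e by rewrite /rho ge_min lexx.
have rhoQ : rho * Q1 < r.
  have h1 : rho <= r / (2 * Q1) by rewrite /rho ge_min lexx orbT.
  have : rho * Q1 <= r / 2.
    have -> : r / 2 = (r / (2 * Q1)) * Q1 by field; lra.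
    by apply: ler_wpM2r => //; exact: ltW.
  move=> h; lra.
have rhor : rho < r.
  apply: le_lt_trans rhoQ; rewrite -[X in X <= _]mulr1; apply: ler_wpM2l; first exact: ltW.
  by rewrite /Q1 lerDl.
have mr0 : 0 < mu / 2 * rho ^+ 2 by apply: mulr_gt0; [apply: divr_gt0 | apply: exprn_gt0].
have [del del0 Hdel] := cont_ball _ _ contJ _ mr0.
have md0 : 0 < Num.min del rho by rewrite lt_min del0 rho0.
have [K [_ hK]] := cluster_ex _ _ Hcl 0%N _ md0.
move: hK; rewrite lt_min => /andP [hKd hKr].
have JK : J (x K) - J xstar < mu / 2 * rho ^+ 2.
  have := Hdel _ hKd; have := ler_norm (J (x K) - J xstar); rewrite distrC => h1 h2; lra.
have claim : forall n, `|xstar - x (K + n)%N| < rho.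
  elim=> [|n IH]; first by rewrite addn0.
  have hkr : `|xstar - x (K + n)%N| < r by lra.
  have hs := P4 _ hkr.
  have hs' : `|s (K + n)%N| <= Cb ^+ 2 / sigma * `|xstar - x (K + n)%N|.
    rewrite -(ler_pM2l sig0).
    have -> : sigma * (Cb ^+ 2 / sigma * `|xstar - x (K + n)%N|) = Cb ^+ 2 * `|xstar - x (K + n)%N|.
      by field; lra.
    exact: hs.
  have hQk : `|xstar - x (K + n)%N| * Q1 < rho * Q1 by rewrite ltr_pM2r.
  have eQ : `|xstar - x (K + n)%N| * Q1 =
     `|xstar - x (K + n)%N| + Cb ^+ 2 / sigma * `|xstar - x (K + n)%N| by rewrite /Q1; ring.
  have hnext : `|xstar - x (K + n).+1| < r.
    have -> : xstar - x (K + n).+1 = (xstar - x (K + n)%N) - s (K + n)%N.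
      by rewrite /s opprB addrA subrK.
    apply: le_lt_trans (ler_normB _ _) _; lra.
  have Nk1 := inN _ hnext.
  have hq := quad _ Nk1.
  have hm : J (x (K + n).+1) <= J (x K) by rewrite -addnS; apply: hmono.
  rewrite addnS distrC ltNge; apply/negP => hge.
  have : mu / 2 * rho ^+ 2 <= mu / 2 * `|x (K + n).+1 - xstar| ^+ 2.
    apply: ler_wpM2l; first by apply: divr_ge0 => //; exact: ltW.
    by rewrite !expr2; apply: ler_pM => //; exact: ltW.
  move=> h; lra.
exists K => // k /= hk.
have := claim (k - K)%N; rewrite subnKC // => h; lra.
Qed.
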